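(* Let $(G,+)$ be a commutative cancellative semigroup. Then there exists a partition $G=A_0\cup A_1$ of $G$ into two cells such that there is no uncountable $X\subseteq G$ and no $i\in 2$ with $\mathrm{FS}(X)\subseteq A_i$. In particular, $\mathrm{Hind}(G,\lambda)$ fails for every uncountable cardinal $\lambda$.
   Context: For $X\subseteq G$, $\mathrm{FS}(X)=\{\sum_{x\in F}x : F\subseteq X \text{ finite and nonempty}\}$ denotes the set of finite sums of (distinct) elements of $X$. For a commutative semigroup $G$ and a cardinal $\lambda$, $\mathrm{Hind}(G,\lambda)$ is the statement: for every partition $G=A_0\cup A_1$ into two cells there exist a set $X\subseteq G$ of cardinality $\lambda$ and an $i\in 2$ with $\mathrm{FS}(X)\subseteq A_i$. *)

(* Defs.v *)
From Stdlib Require Import List.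
Import ListNotations.

Definition associative_op {G : Type} (op : G -> G -> G) : Prop :=
  forall a b c, op a (op b c) = op (op a b) c.
Definition commutative_op {G : Type} (op : G -> G -> G) : Prop :=
  forall a b, op a b = op b a.
(* For a commutative operation, left cancellation is cancellation. *)
Definition cancellative_op {G : Type} (op : G -> G -> G) : Prop :=
  forall a b c, op a b = op a c -> b = c.

(* Sum of the nonempty list x :: l (no identity element is needed). *)
Definition sumNE {G : Type} (op : G -> G -> G) (x : G) (l : list G) : G :=
  fold_left op l x.

(* FS(X): the set of sums of finite nonempty sets of distinct elements of X.
   A finite nonempty subset F of X is enumerated by a duplicate-free list x :: l. *)
Definition FS {G : Type} (op : G -> G -> G) (X : G -> Prop) : G -> Prop :=
  fun y => exists (x : G) (l : list G),
    NoDup (x :: l) /\ (forall z, In z (x :: l) -> X z) /\ y = sumNE op x l.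

Definition countable_set {G : Type} (X : G -> Prop) : Prop :=
  exists f : G -> nat, forall x y, X x -> X y -> f x = f y -> x = y.

(* Main.v *)
From Stdlib Require Import List.
From HB Require Import structures.
Require Import Defs.
From mathcomp Require Import all_boot all_algebra.
From mathcomp Require Import boolp wochoice.
From mathcomp Require Import zify.
Set Implicit Arguments. Unset Strict Implicit. Unset Printing Implicit Defensive.
Import GRing.Theory.

Record CSG := { car :> Type; cop : car -> car -> car;
  cassoc : associative_op cop; ccomm : commutative_op cop;
  ccanc : cancellative_op cop; cpt : car }.

Section Grot.
Variable S : CSG.
Local Notation "a +++ b" := (cop a b) (at level 50, left associativity).
Lemma sA (a b c : S) : a +++ (b +++ c) = a +++ b +++ c. Proof. exact: cassoc. Qed.
Lemma sC (a b : S) : a +++ b = b +++ a. Proof. exact: ccomm. Qed.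
Lemma sCA (a b c : S) : a +++ (b +++ c) = b +++ (a +++ c).
Proof. by rewrite !sA (sC a). Qed.
Lemma sAC (a b c : S) : a +++ b +++ c = a +++ c +++ b.
Proof. by rewrite -!sA (sC b). Qed.
Lemma sACA (a b c d : S) : a +++ b +++ (c +++ d) = a +++ c +++ (b +++ d).
Proof. by rewrite -!sA (sCA b). Qed.
Lemma scancl (a b c : S) : a +++ b = a +++ c -> b = c. Proof. exact: ccanc. Qed.
Lemma scancr (a b c : S) : b +++ a = c +++ a -> b = c.
Proof. by rewrite (sC b) (sC c); apply: scancl. Qed.

Definition grel (p q : S * S) : Prop := p.1 +++ q.2 = q.1 +++ p.2.
Lemma grel_refl p : grel p p. Proof. by []. Qed.
Lemma grel_sym p q : grel p q -> grel q p. Proof. by rewrite /grel => ->. Qed.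
Lemma grel_trans p q r : grel p q -> grel q r -> grel p r.
Proof.
rewrite /grel => H1 H2.
apply: (@scancr (q.1 +++ q.2)).
rewrite [q.1 +++ q.2]sC sACA [r.2 +++ q.1]sC H1 H2 sACA.
by rewrite (sC q.2) [in RHS]sACA (sC q.1 r.1).
Qed.
End Grot.

Arguments grel {S}.
Section Grot2.
Variable S : CSG.
Local Notation "a +++ b" := (cop a b) (at level 50, left associativity).
Definition padd (p q : S * S) : S * S := (p.1 +++ q.1, p.2 +++ q.2).
Lemma grel_padd p p' q q' : grel p p' -> grel q q' -> grel (padd p q) (padd p' q').
Proof.
rewrite /grel /= => H1 H2.
by rewrite sACA H1 H2 sACA.
Qed.
End Grot2.

Definition Gr (S : CSG) := {P : S * S -> Prop | exists p, P = grel p}.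
HB.instance Definition _ (S : CSG) := gen_eqMixin (Gr S).
HB.instance Definition _ (S : CSG) := gen_choiceMixin (Gr S).

Section Grot3.
Variable S : CSG.
Local Notation "a +++ b" := (cop a b) (at level 50, left associativity).
Definition mk (p : S * S) : Gr S := exist _ (grel p) (ex_intro _ p erefl).
Lemma mk_eq p q : grel p q -> mk p = mk q.
Proof.
move=> H; rewrite /mk.
have E : grel p = grel q.
  apply: funext => r; apply: propext; split => Hr.
  - exact: grel_trans (grel_sym H) Hr.
  - exact: grel_trans H Hr.
move: (ex_intro _ p _) (ex_intro _ q _); rewrite E => e1 e2.
by rewrite (Prop_irrelevance e1 e2).
Qed.
Lemma mk_inj p q : mk p = mk q -> grel p q.
Proof.
move=> /(congr1 (@proj1_sig _ _)) /= E.
have : grel q q by []. by rewrite -E.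
Qed.
Definition rep (u : Gr S) : S * S := projT1 (cid (proj2_sig u)).
Lemma repK u : mk (rep u) = u.
Proof.
rewrite /rep; case: cid => p /= Hp.
case: u Hp => P HP /= Hp; subst P.
by rewrite /mk; congr exist; apply: Prop_irrelevance.
Qed.
Lemma mk_surj u : exists p, u = mk p. Proof. by exists (rep u); rewrite repK. Qed.
Lemma rep_mk p : grel (rep (mk p)) p. Proof. by apply: mk_inj; rewrite repK. Qed.

Definition gadd (u v : Gr S) : Gr S := mk (padd (rep u) (rep v)).
Definition gopp (u : Gr S) : Gr S := mk ((rep u).2, (rep u).1).
Definition gzero : Gr S := mk (cpt S, cpt S).
Lemma gadd_mk p q : gadd (mk p) (mk q) = mk (padd p q).
Proof. by apply: mk_eq; apply: grel_padd; apply: rep_mk. Qed.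
Lemma gopp_mk p : gopp (mk p) = mk (p.2, p.1).
Proof.
apply: mk_eq; have := rep_mk p; rewrite /grel /= => H.
by rewrite sC -H sC.
Qed.
Lemma gaddA : associative gadd.
Proof.
move=> u v w; case: (mk_surj u) (mk_surj v) (mk_surj w) => [p ->] [q ->] [r ->].
rewrite !gadd_mk; congr mk; by rewrite /padd /= !sA.
Qed.
Lemma gaddC : commutative gadd.
Proof.
move=> u v; case: (mk_surj u) (mk_surj v) => [p ->] [q ->].
by rewrite !gadd_mk /padd (sC p.1) (sC p.2).
Qed.
Lemma gadd0 : left_id gzero gadd.
Proof.
move=> u; case: (mk_surj u) => [p ->]; rewrite gadd_mk; apply: mk_eq.
by rewrite /grel /padd /= sCA sA.
Qed.
Lemma gaddN : left_inverse gzero gopp gadd.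
Proof.
move=> u; case: (mk_surj u) => [p ->]; rewrite gopp_mk gadd_mk; apply: mk_eq.
by rewrite /grel /padd /= sC (sC p.2).
Qed.
End Grot3.

HB.instance Definition _ (S : CSG) := GRing.isZmodule.Build (Gr S) (@gaddA S) (@gaddC S) (@gadd0 S) (@gaddN S).

Section Emb.
Local Open Scope ring_scope.
Variable S : CSG.
Local Notation "a +++ b" := (cop a b) (at level 50, left associativity).
Definition emb (g : S) : Gr S := mk (g +++ cpt S, cpt S).
Lemma emb_add g h : emb (g +++ h) = emb g + emb h.
Proof.
rewrite /emb [_ + _]gadd_mk; apply: mk_eq.
by rewrite /grel /padd /= [in RHS]sACA -!sA.
Qed.
Lemma emb_inj g h : emb g = emb h -> g = h.
Proof.
move=> /mk_inj; rewrite /grel /= => H.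
by apply: (@scancr _ (cpt S)); apply: (@scancr _ (cpt S)).
Qed.
End Emb.

Section WO.
Variables (I : eqType) (R : rel I) (woR : well_order R).
Definition ltw x y := R x y && (x != y).

Lemma wo_chT : wo_chain R predT.
Proof. by move=> A _; apply: woR. Qed.
Lemma R_total x y : R x y || R y x.
Proof. exact: (wo_chainW wo_chT). Qed.
Lemma R_refl x : R x x.
Proof. exact: (wo_chain_reflexive wo_chT). Qed.
Lemma R_anti x y : R x y -> R y x -> x = y.
Proof. move=> h1 h2; apply: (wo_chain_antisymmetric wo_chT) => //; exact/andP. Qed.
Lemma R_trans x y z : R x y -> R y z -> R x z.
Proof.
move=> Hxy Hyz.
have ne : nonempty [mem [:: x; y; z]] by exists x; rewrite inE eqxx.
case: (woR ne) => m [[Hm lb] _].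
move: Hm; rewrite !inE => /or3P [] /eqP Em; subst m.
- by apply: lb; rewrite !inE eqxx !orbT.
- have := lb x; rewrite !inE eqxx => /(_ isT) Hyx.
  by rewrite (R_anti Hxy Hyx).
- have := lb y; rewrite !inE eqxx orbT => /(_ isT) Hzy.
  by rewrite -(R_anti Hyz Hzy).
Qed.
Lemma ltw_irr x : ~~ ltw x x. Proof. by rewrite /ltw eqxx andbF. Qed.
Lemma ltw_trans x y z : ltw x y -> ltw y z -> ltw x z.
Proof.
rewrite /ltw => /andP[h1 n1] /andP[h2 n2]; rewrite (R_trans h1 h2) /=.
apply/eqP => E; subst z. by move: n1; rewrite (R_anti h1 h2) eqxx.
Qed.
Lemma ltw_total x y : x != y -> ltw x y || ltw y x.
Proof.
move=> n; rewrite /ltw n eq_sym n !andbT; exact: R_total.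
Qed.
Lemma ltw_asym x y : ltw x y -> ~~ ltw y x.
Proof.
move=> h; apply/negP => h'. by move: (ltw_trans h h'); rewrite (negbTE (ltw_irr x)).
Qed.
Lemma ltw_wf : well_founded ltw.
Proof.
move=> x; apply: contrapT => Hx.
have ne : nonempty [pred y | `[< ~ Acc ltw y >]] by exists x; rewrite inE; apply/asboolP.
case: (woR ne) => m [[Hm lb] _].
move: Hm; rewrite inE => /asboolP; apply; constructor => y Hy.
apply: contrapT => Hny.
have : R m y by apply: lb; rewrite inE; apply/asboolP.
move: Hy; rewrite /ltw => /andP [Hym nym] Hmy.
by move: nym; rewrite (R_anti Hym Hmy) eqxx.
Qed.
End WO.

From mathcomp Require Import zify.
Import GRing.Theory Num.Theory.

Lemma zswap (V : zmodType) (x y v1 v2 : V) : (x + v1 = y + v2 -> x - y = v2 - v1)%R.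
Proof.
move=> E; apply/eqP; rewrite subr_eq -(addrK v1 x) E.
by rewrite [(v2 - v1 + y)%R]addrC addrA.
Qed.

Section NF.
Local Open Scope ring_scope.
Variables (V : zmodType) (I : eqType) (R : rel I) (woR : well_order R) (g : I -> V).
Local Notation lt := (ltw R).

Definition idx (l : seq (I * int)%type) : seq I := map fst l.
Definition ev (l : seq (I * int)%type) : V := \sum_(p <- l) g p.1 *~ p.2.
Lemma ev_nil : ev [::] = 0. Proof. by rewrite /ev big_nil. Qed.
Lemma ev_cons p l : ev (p :: l) = g p.1 *~ p.2 + ev l. Proof. by rewrite /ev big_cons. Qed.
Lemma ev_cat l1 l2 : ev (l1 ++ l2) = ev l1 + ev l2. Proof. by rewrite /ev big_cat. Qed.
Lemma ev_perm l1 l2 : perm_eq l1 l2 -> ev l1 = ev l2. Proof. exact: perm_big. Qed.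
Definition scl (k : int) l := map (fun p : I * int => (p.1, p.2 * k)) l.
Lemma ev_scl k l : ev (scl k l) = ev l *~ k.
Proof. by rewrite /ev big_map mulrz_suml; apply: eq_bigr => p _; rewrite mulrzA. Qed.
Lemma idx_cat l1 l2 : idx (l1 ++ l2) = idx l1 ++ idx l2. Proof. exact: map_cat. Qed.
Lemma idx_scl k l : idx (scl k l) = idx l. Proof. by rewrite /idx /scl -map_comp. Qed.

Definition inH a v := exists l, (forall b, b \in idx l -> lt b a) /\ ev l = v.
Lemma inH_ev a l : (forall b, b \in idx l -> lt b a) -> inH a (ev l).
Proof. by move=> H; exists l. Qed.
Lemma inHD a u v : inH a u -> inH a v -> inH a (u + v).
Proof.
move=> [l1 [H1 <-]] [l2 [H2 <-]]; exists (l1 ++ l2); split; last exact: ev_cat.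
by move=> b; rewrite /idx map_cat mem_cat => /orP [/H1|/H2].
Qed.
Lemma inHZ a u k : inH a u -> inH a (u *~ k).
Proof. move=> [l [H <-]]; exists (scl k l); by rewrite idx_scl ev_scl. Qed.
Lemma inHN a u : inH a u -> inH a (- u).
Proof. move=> /(inHZ (-1)); by rewrite mulrNz mulr1z. Qed.
Lemma inHB a u v : inH a u -> inH a v -> inH a (u - v).
Proof. by move=> Hu /inHN; apply: inHD. Qed.

Definition hasO a (n : nat) := (0 < n)%N /\ inH a (g a *+ n) /\
  forall m, (0 < m < n)%N -> ~ inH a (g a *+ m).
Lemma hasO_uniq a n m : hasO a n -> hasO a m -> n = m.
Proof.
move=> [n0 [Hn Mn]] [m0 [Hm Mm]].
case: (ltngtP n m) => // H.
- by case: (Mm n); rewrite ?n0.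
- by case: (Mn m); rewrite ?m0.
Qed.
Lemma hasO_ex a n : (0 < n)%N -> inH a (g a *+ n) -> exists o, hasO a o /\ (o <= n)%N.
Proof.
elim/ltn_ind: n => n IH n0 Hn.
case: (pselect (exists m, (0 < m < n)%N /\ inH a (g a *+ m))).
- case=> m [/andP[m0 mn] Hm]; case: (IH m mn m0 Hm) => o [Ho om].
  by exists o; split => //; apply: leq_trans om (ltnW mn).
- move=> Hno; exists n; split => //; split => //; split => // m Hm Hin.
  by apply: Hno; exists m.
Qed.
Lemma keyH a d : d != 0 -> inH a (g a *~ d) -> exists o, hasO a o /\ (o <= `|d|)%N.
Proof.
case: d => n d0 H.
- apply: hasO_ex => //; by case: n d0 {H}.
- apply: hasO_ex => //.
  move: H => /inHN; by rewrite NegzE mulrNz opprK -pmulrn.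
Qed.

Definition valid a (z : int) := z != 0 /\ forall n, hasO a n -> 0 < z < n%:Z.
Lemma valid_notH a z : valid a z -> ~ inH a (g a *~ z).
Proof.
move=> [z0 Hz] /(keyH z0) [o [Ho Hle]]; have := Hz o Ho.
move: Hle; lia.
Qed.
Lemma valid_eq a n m : valid a n -> valid a m -> inH a (g a *~ (n - m)) -> n = m.
Proof.
move=> [n0 Hn] [m0 Hm] H; case: (eqVneq n m) => // nm.
have d0 : n - m != 0 by rewrite subr_eq0.
case: (keyH d0 H) => o [Ho Hle]; have := Hn o Ho; have := Hm o Ho.
move: Hle; lia.
Qed.

Fixpoint srt (l : seq (I * int)%type) : Prop :=
  match l with [::] => True | p :: l' => (forall b, b \in idx l' -> lt b p.1) /\ srt l' end.
Definition canon l := srt l /\ forall p, p \in l -> valid p.1 p.2.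

Lemma srt_uniq l : srt l -> uniq (idx l).
Proof.
elim: l => //= p l IH [H1 H2]; rewrite IH // andbT.
by apply/negP => /H1; rewrite (negbTE (ltw_irr _ _)).
Qed.
Lemma canon_uniq l : canon l -> uniq (idx l). Proof. by case=> /srt_uniq. Qed.

Lemma canon_tail p l : canon (p :: l) -> canon l.
Proof. by case=> [[_ H1] H2]; split => // q Hq; apply: H2; rewrite inE Hq orbT. Qed.
Lemma canon_head p l : canon (p :: l) -> valid p.1 p.2.
Proof. by case=> _ H; apply: H; rewrite inE eqxx. Qed.
Lemma canon_lt p l : canon (p :: l) -> forall b, b \in idx l -> lt b p.1.
Proof. by case=> [[H _] _]. Qed.

Lemma canon_uniq_ev L1 L2 : canon L1 -> canon L2 -> ev L1 = ev L2 -> L1 = L2.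
Proof.
have side : forall a n L1 L2, canon ((a, n) :: L1) -> (forall b, b \in idx L2 -> lt b a) ->
    ev ((a, n) :: L1) = ev L2 -> False.
  move=> a n L1' L2' C1 H2 E.
  apply: (valid_notH (canon_head C1)).
  have -> : g a *~ n = ev L2' - ev L1' by rewrite -E ev_cons /= addrK.
  by apply: inHB; apply: inH_ev => // b /(canon_lt C1).
elim: L1 L2 => [|[a n] L1 IH] [|[b m] L2] //.
- move=> _ C2 E; exfalso; apply: (side b m L2 [::]) => //.
- move=> C1 _ E; exfalso; apply: (side a n L1 [::]) => //.
- move=> C1 C2 E.
  case: (eqVneq a b) => [Eab|nab].
  + subst b.
    have Enm : n = m.
      apply: (valid_eq (canon_head C1) (canon_head C2)).
      have -> : g a *~ (n - m) = ev L2 - ev L1.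
        move: E; rewrite !ev_cons /= mulrzBr => E.
        exact: zswap.
      by apply: inHB; apply: inH_ev => // b; [apply: (canon_lt C2)|apply: (canon_lt C1)].
    subst m; congr cons; apply: IH; [exact: canon_tail C1|exact: canon_tail C2|].
    by move: E; rewrite !ev_cons => /addrI.
  + case/orP: (ltw_total woR nab) => Hlt; exfalso.
    * apply: (side b m L2 ((a, n) :: L1) C2 _ (esym E)).
      move=> c; rewrite /idx /= inE => /orP [/eqP ->|Hc] //.
      apply: (ltw_trans woR _ Hlt); exact: (canon_lt C1 Hc).
    * apply: (side a n L1 ((b, m) :: L2) C1 _ E).
      move=> c; rewrite /idx /= inE => /orP [/eqP ->|Hc] //.
      apply: (ltw_trans woR _ Hlt); exact: (canon_lt C2 Hc).
Qed.

Definition closed (S : I -> Prop) := forall a, S a -> forall o, hasO a o ->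
  exists l, (forall b, b \in idx l -> S b /\ lt b a) /\ ev l = g a *+ o.

Lemma maxl (l : seq I) : l != [::] -> exists a, a \in l /\ forall b, b \in l -> lt b a || (b == a).
Proof.
elim: l => // x l IH _.
case: (eqVneq l [::]) => [->|ln].
  by exists x; split; rewrite ?inE ?eqxx // => b; rewrite inE => ->; rewrite orbT.
case: (IH ln) => a [Ha Hmax].
case: (eqVneq x a) => [Exa|nxa].
  subst a; exists x; split; first by rewrite inE eqxx.
  by move=> b; rewrite inE => /orP [->|/Hmax]; rewrite ?orbT.
case/orP: (ltw_total woR nxa) => H.
- exists a; split; first by rewrite inE Ha orbT.
  by move=> b; rewrite inE => /orP [/eqP ->|/Hmax]; rewrite ?H.
- exists x; split; first by rewrite inE eqxx.
  move=> b; rewrite inE => /orP [->|/Hmax]; first by rewrite orbT.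
  by move=> /orP [Hb|/eqP ->]; rewrite ?H // (ltw_trans woR Hb H).
Qed.

Lemma split_ev a l : ev l = g a *~ (\sum_(p <- l | p.1 == a) p.2) + ev [seq p <- l | p.1 != a].
Proof.
rewrite /ev (bigID (fun p : (I * int)%type => p.1 == a)) /= big_filter; congr (_ + _).
by rewrite mulrz_sumr; apply: eq_bigr => p /eqP ->.
Qed.

Lemma NLa S : closed S -> forall a l, (forall b, b \in idx l -> S b /\ (lt b a || (b == a))) ->
  exists L, canon L /\ (forall b, b \in idx L -> S b /\ (lt b a || (b == a))) /\ ev L = ev l.
Proof.
move=> HS a; elim/(well_founded_induction (ltw_wf woR)): a => a IH l Hl.
set M := \sum_(p <- l | p.1 == a) p.2.
set l' := [seq p <- l | p.1 != a].
have Hl' : forall b, b \in idx l' -> S b /\ lt b a.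
  move=> b /mapP [p]; rewrite mem_filter => /andP [pa pl] ->.
  have := Hl p.1 (map_f _ pl) => [[Sp /orP [//|/eqP E]]].
  by move: pa; rewrite E eqxx.
have [r [l'' [Er [Hl'' [Hr0 Hro]]]]] : exists r l'', ev l = g a *~ r + ev l'' /\
    (forall b, b \in idx l'' -> S b /\ lt b a) /\ (r != 0 -> S a) /\
    (forall n, hasO a n -> 0 <= r < n%:Z).
  case: (pselect (S a)) => Sa.
  - case: (pselect (exists o, hasO a o)) => [[o Ho]|nO].
    + case: (HS a Sa o Ho) => lc [Hlc Elc].
      have o0 : (0 < o)%N by case: Ho.
      exists (M %% o)%Z, (l' ++ scl (M %/ o)%Z lc); split.
      * have E1 : g a *~ M = g a *~ (M %% o)%Z + (g a *+ o) *~ (M %/ o)%Z.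
          by rewrite {1}(divz_eq M o) mulrzDr addrC pmulrn -mulrzA mulrC.
        rewrite ev_cat ev_scl Elc (split_ev a l) -/M -/l' E1.
        by rewrite -!addrA; congr (_ + _); rewrite addrC.
      split.
        move=> b; rewrite idx_cat mem_cat idx_scl => /orP [/Hl'//|/Hlc//].
      split; first by [].
      move=> n Hn; rewrite (hasO_uniq Hn Ho) modz_ge0 ?ltz_pmod //; lia.
    + exists M, l'; split; first exact: split_ev.
      split; first exact: Hl'.
      split; first by [].
      by move=> n Hn; exfalso; apply: nO; exists n.
  - exists 0, l'; split.
      have M0 : M = 0.
        rewrite /M big_seq_cond big1 // => p /andP [pl /eqP pa].
        exfalso; apply: Sa; rewrite -pa; exact: (Hl _ (map_f _ pl)).1.
      by rewrite (split_ev a l) -/M M0 !mulr0z.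
    split; first exact: Hl'.
    by split; [rewrite eqxx|move=> n [n0 _]; lia].
have [L0 [CL0 [HL0 EL0]]] : exists L0, canon L0 /\ (forall b, b \in idx L0 -> S b /\ lt b a) /\ ev L0 = ev l''.
  case: (eqVneq (idx l'') [::]) => [E0|ne].
  - exists [::]; split; first by split.
    split; first by [].
    by case: l'' E0 {Hl'' Er} => //; rewrite ev_nil.
  - case: (maxl ne) => b [Hb Hmax].
    have Hba := (Hl'' b Hb).2.
    case: (IH b Hba l'') => [c Hc|L0 [CL0 [HL0 EL0]]].
      by split; [exact: (Hl'' c Hc).1|exact: Hmax].
    exists L0; split => //; split => // c Hc.
    case: (HL0 c Hc) => Sc /orP [Hcb|/eqP E]; split => //.
      exact: (ltw_trans woR Hcb Hba).
    by rewrite E.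
case: (eqVneq r 0) => [r0|rn0].
- exists L0; split => //; split.
    by move=> b /HL0 [Sb Hb]; rewrite Hb.
  by rewrite Er EL0 r0 mulr0z add0r.
- exists ((a, r) :: L0); split.
    split.
      split; first by move=> b /HL0 [].
      by case: CL0.
    move=> p; rewrite inE => /orP [/eqP -> /=|]; last by case: CL0 => _; apply.
    split => // n Hn; have := Hro n Hn; move: rn0; lia.
  split; last by rewrite ev_cons EL0 Er.
  move=> b; rewrite /idx /= inE => /orP [/eqP ->|/HL0 [Sb Hb]].
    by rewrite eqxx orbT; split => //; apply: Hr0.
  by rewrite Hb.
Qed.

Lemma NL S : closed S -> forall l, (forall b, b \in idx l -> S b) ->
  exists L, canon L /\ (forall b, b \in idx L -> S b) /\ ev L = ev l.
Proof.
move=> HS l Hl; case: (eqVneq (idx l) [::]) => [E0|ne].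
  exists [::]; split; first by split.
  split => //; by case: l E0 {Hl}.
case: (maxl ne) => a [Ha Hmax].
case: (NLa HS (a := a) (l := l)) => [b Hb|L [CL [HL EL]]].
  by split; [exact: Hl|exact: Hmax].
by exists L; split => //; split => // b /HL [].
Qed.

Lemma closedT : closed (fun _ => True).
Proof. by move=> a _ o [_ [[l [Hl El]] _]]; exists l; split => // b /Hl. Qed.
Lemma closed_lt a : closed (fun b => lt b a).
Proof.
move=> b Hb o [_ [[l [Hl El]] _]]; exists l; split => // c /Hl Hc; split => //.
exact: (ltw_trans woR Hc Hb).
Qed.
Lemma closedU S1 S2 : closed S1 -> closed S2 -> closed (fun b => S1 b \/ S2 b).
Proof.
move=> H1 H2 a [Sa|Sa] o Ho.
- case: (H1 a Sa o Ho) => l [Hl El]; exists l; split => // b /Hl [? ?]; split; auto.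
- case: (H2 a Sa o Ho) => l [Hl El]; exists l; split => // b /Hl [? ?]; split; auto.
Qed.
Lemma closed_ext S1 S2 : (forall b, S1 b <-> S2 b) -> closed S1 -> closed S2.
Proof.
move=> E H a /E Sa o Ho; case: (H a Sa o Ho) => l [Hl El]; exists l; split => // b /Hl [? ?].
by split => //; apply/E.
Qed.
Lemma closed_cat (C1 C2 : seq I) : closed (fun b => b \in C1) -> closed (fun b => b \in C2) ->
  closed (fun b => b \in C1 ++ C2).
Proof.
move=> H1 H2; apply: closed_ext (closedU H1 H2) => b.
by rewrite mem_cat; split => [[->|->]|/orP]; rewrite ?orbT.
Qed.

Lemma closed_list (s : seq I) : (forall b, b \in s -> exists C : seq I, b \in C /\ closed (fun c => c \in C)) ->
  exists C : seq I, {subset s <= C} /\ closed (fun c => c \in C).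
Proof.
elim: s => [|x s IH] H.
  by exists [::]; split => // a o.
case: (H x (mem_head _ _)) => Cx [Hx Cl1].
case: IH => [b Hb|C [HC Cl2]]; first by apply: H; rewrite inE Hb orbT.
exists (Cx ++ C); split; last exact: closed_cat.
by move=> b; rewrite inE mem_cat => /orP [/eqP ->|/HC ->]; rewrite ?Hx ?orbT.
Qed.

Lemma FC a : exists C : seq I, a \in C /\ closed (fun c => c \in C).
Proof.
elim/(well_founded_induction (ltw_wf woR)): a => a IH.
case: (pselect (exists o, hasO a o)) => [[o Ho]|nO].
- have [l [Hl El]] := Ho.2.1.
  case: (NL (closed_lt (a:=a)) (l := l)) => [b /Hl //|L [CL [HL EL]]].
  case: (closed_list (s := idx L)) => [b Hb|C [HC ClC]].
    exact: IH _ (HL b Hb).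
  exists (a :: C); split; first exact: mem_head.
  have E : forall b, ((b == a) \/ (b \in C)) <-> (b \in a :: C).
    by move=> b; rewrite inE; split => [/orP//|/orP].
  apply: closed_ext E _ => b [/eqP ->|Hb] o' Ho'.
    rewrite (hasO_uniq Ho' Ho).
    exists L; split; last by rewrite EL El.
    by move=> c Hc; split; [right; exact: HC|exact: HL].
  case: (ClC b Hb o' Ho') => l' [Hl' El']; exists l'; split => // c /Hl' [? ?]; split; auto.
- exists [:: a]; split; first exact: mem_head.
  by move=> b; rewrite inE => /eqP E o Ho; subst b; exfalso; apply: nO; exists o.
Qed.

Lemma canon_ex l : exists L, canon L /\ ev L = ev l.
Proof. by case: (NL closedT (l := l)) => // L [CL [_ EL]]; exists L. Qed.

Lemma perm_idx l1 l2 : perm_eq l1 l2 -> idx l1 =i idx l2.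
Proof. by move=> P; apply: perm_mem; apply: perm_map. Qed.

Lemma insert_ex L p : canon L -> valid p.1 p.2 -> p.1 \notin idx L ->
  exists L', canon L' /\ perm_eq (p :: L) L'.
Proof.
elim: L => [|q L IH] CL Vp Hp.
  exists [:: p]; split => //; split => //.
  by move=> r; rewrite inE => /eqP ->.
have nq : p.1 != q.1 by apply: contraNneq Hp => ->; rewrite /idx /= inE eqxx.
have Hp' : p.1 \notin idx L by apply: contra Hp; rewrite /idx /= inE => ->; rewrite orbT.
case/orP: (ltw_total woR nq) => H.
- case: (IH (canon_tail CL) Vp Hp') => L' [CL' PL'].
  exists (q :: L'); split.
    split.
      split; last by case: CL'.
      move=> b; rewrite -(perm_idx PL') /idx /= inE => /orP [/eqP ->//|Hb].
      exact: (canon_lt CL Hb).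
    move=> r; rewrite inE => /orP [/eqP ->|Hr]; first exact: canon_head CL.
    by case: CL' => _; apply.
  by rewrite -(perm_cons q) in PL'; apply: (perm_trans _ PL'); exact/permPl/(perm_catCA [:: p] [:: q] L).
- exists (p :: q :: L); split => //.
  split.
    split; last by case: CL.
    move=> b; rewrite /idx /= inE => /orP [/eqP ->//|Hb].
    by apply: (ltw_trans woR _ H); exact: (canon_lt CL Hb).
  move=> r; rewrite inE => /orP [/eqP ->//|Hr].
  by case: CL => _; apply.
Qed.

Lemma sort_ex W : uniq (idx W) -> (forall p, p \in W -> valid p.1 p.2) ->
  exists W', canon W' /\ perm_eq W W'.
Proof.
elim: W => [|p W IH] Un Vd.
  by exists [::]; split.
move: Un; rewrite /idx /= => /andP [Hp Un].
case: IH => [//|r Hr|W1 [C1 P1]]; first by apply: Vd; rewrite inE Hr orbT.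
case: (insert_ex C1 (Vd p (mem_head _ _))) => [|W2 [C2 P2]].
  by rewrite -(perm_idx P1).
exists W2; split => //; apply: perm_trans P2; by rewrite perm_cons.
Qed.

Lemma canon_bound (C : seq I) Rl k : closed (fun c => c \in C) -> canon Rl ->
  {subset idx Rl <= C} -> forall L, canon L -> ev L = ev Rl *~ k -> {subset idx L <= C}.
Proof.
move=> ClC CR HR L CL EL.
case: (NL ClC (l := scl k Rl)) => [b|L' [CL' [HL' EL']]].
  by rewrite idx_scl => /HR.
rewrite ev_scl -EL in EL'.
by rewrite (canon_uniq_ev CL CL' (esym EL')) => b /HL'.
Qed.
End NF.

Lemma pickle_inj (T : countType) : injective (@pickle T).
Proof. exact: pcan_inj pickleK. Qed.

Section Count.
Variable A : Type.
Implicit Types P Q Y : A -> Prop.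

Lemma cnt_sub P Q : (forall x, P x -> Q x) -> countable_set Q -> countable_set P.
Proof. move=> H [f Hf]; exists f => x y /H Hx /H Hy; exact: Hf. Qed.

Lemma cnt_empty P : (forall x, ~ P x) -> countable_set P.
Proof. by move=> H; exists (fun _ => 0%N) => x y /H. Qed.

Lemma cnt_union P Q : countable_set P -> countable_set Q -> countable_set (fun x => P x \/ Q x).
Proof.
move=> [f Hf] [h Hh].
exists (fun x => if pselect (P x) then (2 * f x)%N else (2 * h x).+1) => x y Hx Hy.
case: pselect => Px; case: pselect => Py /= E.
- by apply: Hf => //; lia.
- lia.
- lia.
- apply: Hh; [by case: Hx|by case: Hy|lia].
Qed.

Lemma cnt_single (a : A) : countable_set (fun x => x = a).
Proof. by exists (fun _ => 0%N) => x y -> ->. Qed.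

Lemma cnt_list (l : list A) : countable_set (fun x => List.In x l).
Proof.
elim: l => [|a l IH] /=; first by apply: cnt_empty => x [].
apply: cnt_sub (cnt_union (cnt_single a) IH) => x [->|H]; auto.
Qed.

Lemma cnt_bigU (B : Type) (l : list B) (P : B -> A -> Prop) :
  (forall b, List.In b l -> countable_set (P b)) ->
  countable_set (fun x => exists b, List.In b l /\ P b x).
Proof.
elim: l => [|b l IH] H.
  by apply: cnt_empty => x [b []].
apply: cnt_sub (cnt_union (H b (or_introl erefl)) (IH (fun c Hc => H c (or_intror Hc)))).
move=> x [c [[<-|Hc] Pc]]; first by left.
by right; exists c.
Qed.

Lemma uncnt_diff Y Z : ~ countable_set Y -> countable_set Z -> exists x, Y x /\ ~ Z x.
Proof.
move=> HY HZ; apply: contrapT => Hn; apply: HY; apply: cnt_sub HZ => x Yx.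
by apply: contrapT => Zx; apply: Hn; exists x.
Qed.

Lemma pigeon (B : countType) Y (h : A -> B) : ~ countable_set Y ->
  exists b, ~ countable_set (fun x => Y x /\ h x = b).
Proof.
move=> HY; apply: contrapT => Hn.
have Hc : forall b, countable_set (fun x => Y x /\ h x = b).
  by move=> b; apply: contrapT => Hb; apply: Hn; exists b.
pose F b := projT1 (cid (Hc b)).
have FP : forall b x y, Y x /\ h x = b -> Y y /\ h y = b -> F b x = F b y -> x = y.
  by move=> b; rewrite /F; case: cid.
apply: HY; exists (fun x => pickle (pickle (h x), F (h x) x)) => x y Yx Yy /pickle_inj [].
move=> /pickle_inj Ehh; rewrite Ehh => EF.
exact: (FP (h y)).
Qed.
End Count.

Lemma memIn (T : eqType) (x : T) s : x \in s -> List.In x s.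
Proof. elim: s => //= y s IH; rewrite inE => /orP [/eqP ->|/IH]; auto. Qed.
Lemma Inmem (T : eqType) (x : T) s : List.In x s -> x \in s.
Proof. elim: s => //= y s IH [->|/IH]; rewrite inE ?eqxx // => ->; by rewrite orbT. Qed.

Lemma in_flatten_map (B : Type) (T : eqType) (f : B -> seq T) xs y i :
  List.In y xs -> i \in f y -> i \in flatten (map f xs).
Proof.
elim: xs => //= z xs IH [<- Hi|Hy Hi]; rewrite mem_cat ?Hi //.
by rewrite IH ?orbT.
Qed.

Section DSys.
Variables (A : Type) (I : eqType).
Local Notation P2 := (I * int)%type.

Definition coefi (i : I) (l : seq P2) : int := (nth (i, 0%R) l (find (fun p : P2 => p.1 == i) l)).2.
Lemma coefiP i l : i \in idx l -> (i, coefi i l) \in l.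
Proof.
move=> /mapP [p pl ->].
have Hh : has (fun q : P2 => q.1 == p.1) l by apply/hasP; exists p.
have := nth_find (p.1, 0%R) Hh; rewrite /coefi.
set q := nth _ _ _ => /eqP Eq.
have -> : (p.1, q.2) = q by rewrite -Eq; case: q {Eq}.
by apply: mem_nth; rewrite -has_find.
Qed.

Lemma DS_case2 (S : A -> seq P2) (Y : A -> Prop) : ~ countable_set Y ->
  (forall p, countable_set (fun x => Y x /\ p \in S x)) ->
  forall (m : nat) (F : seq I), exists xs : list A,
    size xs = m /\ List.NoDup xs /\
    (forall x, List.In x xs -> Y x /\ (forall i, i \in idx (S x) -> i \notin F)) /\
    (forall x y, List.In x xs -> List.In y xs -> x <> y -> forall i, i \in idx (S x) -> i \notin idx (S y)).
Proof.
move=> HY Hp.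
have Hi : forall i, countable_set (fun x => Y x /\ i \in idx (S x)).
  move=> i; apply: contrapT => Hu.
  case: (pigeon (fun x => coefi i (S x)) Hu) => z Hz; apply: Hz.
  apply: cnt_sub (Hp (i, z)) => x [[Yx Hx] <-]; split => //; exact: coefiP.
move=> m F; elim: m => [|m [xs [Hs [Hnd [H1 H2]]]]].
  by exists [::]; split => //; split; [constructor|split].
pose U := F ++ flatten [seq idx (S y) | y <- xs].
have Hz : countable_set (fun x => (exists i, List.In i U /\ (Y x /\ i \in idx (S x))) \/ List.In x xs).
  apply: cnt_union; last exact: cnt_list.
  by apply: cnt_bigU => i _; apply: Hi.
have InU : forall i, i \in U -> List.In i U.
  by move=> i; apply: memIn.
case: (uncnt_diff HY Hz) => x [Yx Hx].
have Hxi : forall i, i \in idx (S x) -> i \notin U.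
  move=> i Hi' ; apply/negP => /InU HU; apply: Hx; left; exists i; split => //.
exists (x :: xs); split; first by rewrite /= Hs.
split.
  constructor => // Hin; apply: Hx; right => //.
split.
  move=> y [<-|Hy]; last exact: H1.
  split => // i /Hxi; by rewrite mem_cat negb_or => /andP [].
have Hdis : forall y, List.In y xs -> forall i, i \in idx (S x) -> i \notin idx (S y).
  move=> y Hy i /Hxi; rewrite mem_cat negb_or => /andP [_]; apply: contra => Hiy.
  exact: in_flatten_map Hy Hiy.
move=> y z [<-|Hy] [<-|Hz'] nyz //.
- exact: Hdis.
- move=> i Hi1; apply/negP => Hi2; move: (Hdis y Hy i Hi2); by rewrite Hi1.
- exact: H2.
Qed.


Lemma DS n : forall (S : A -> seq P2) (Y : A -> Prop), ~ countable_set Y ->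
  (forall x, Y x -> uniq (idx (S x)) /\ size (S x) = n) ->
  exists Rl : seq P2, forall (m : nat) (F : seq I), exists xs : list A, exists P : A -> seq P2,
    size xs = m /\ List.NoDup xs /\
    (forall x, List.In x xs -> Y x /\ perm_eq (S x) (Rl ++ P x) /\ (forall i, i \in idx (P x) -> i \notin F)) /\
    (forall x y, List.In x xs -> List.In y xs -> x <> y -> forall i, i \in idx (P x) -> i \notin idx (P y)).
Proof.
have case2 : forall (S : A -> seq P2) (Y : A -> Prop), ~ countable_set Y ->
    ~ (exists p, ~ countable_set (fun x => Y x /\ p \in S x)) ->
  exists Rl : seq P2, forall (m : nat) (F : seq I), exists xs : list A, exists P : A -> seq P2,
    size xs = m /\ List.NoDup xs /\
    (forall x, List.In x xs -> Y x /\ perm_eq (S x) (Rl ++ P x) /\ (forall i, i \in idx (P x) -> i \notin F)) /\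
    (forall x y, List.In x xs -> List.In y xs -> x <> y -> forall i, i \in idx (P x) -> i \notin idx (P y)).
  move=> S Y HY Hn; exists [::] => m F.
  case: (DS_case2 (S:=S) HY _ m F) => [p|xs [H1 [H2 [H3 H4]]]].
    by apply: contrapT => Hc; apply: Hn; exists p.
  exists xs, S; split => //; split => //; split => // x Hx.
  by case: (H3 x Hx) => Yx Hf; split => //; split.
elim: n => [|n IH] S Y HY HS; case: (pselect (exists p, ~ countable_set (fun x => Y x /\ p \in S x)));
  try exact: case2.
- case=> p Hp; exfalso; apply: Hp; apply: cnt_empty => x [Yx].
  by case: (HS x Yx) => _; case: (S x).
- case=> p Hp.
  pose Y' x := Y x /\ p \in S x.
  pose S' x := rem p (S x).
  have HPm : forall x, Y' x -> perm_eq (S x) (p :: S' x) by move=> x [_ Hx]; exact: perm_to_rem.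
  case: (IH S' Y' Hp) => [x Hx|Rl HRl].
    case: (HS x Hx.1) => U Sz; split.
      by move: U; rewrite (perm_uniq (perm_map fst (HPm x Hx))) /= => /andP [].
    by rewrite size_rem ?Sz //; case: Hx.
  exists (p :: Rl) => m F.
  case: (HRl m F) => xs [P [H1 [H2 [H3 H4]]]].
  exists xs, P; split => //; split => //; split => // x Hx.
  case: (H3 x Hx) => Yx [Px Fx]; split; first by case: Yx.
  split => //; apply: perm_trans (HPm x Yx) _; by rewrite /= perm_cons.
Qed.
End DSys.

Lemma ivt (f : nat -> nat) a T D : forall b, a <= b -> (forall k, a <= k < b -> f k.+1 <= f k + D) ->
  f a < T -> T <= f b -> exists k, a < k <= b /\ T <= f k < T + D.
Proof.
elim => [|b IH] Hab Hs Ha Hb.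
  have a0 : a = 0 by lia. subst a; lia.
case: (leqP a b) => Hab'; last first.
  have E : a = b.+1 by lia. subst a; lia.
case: (leqP T (f b)) => HT.
  case: (IH Hab' _ Ha HT) => [k Hk|k [Hk1 Hk2]].
    apply: Hs; lia.
  exists k; split => //; lia.
exists b.+1; split; first lia.
have := Hs b; rewrite Hab' leqnn => /(_ isT); lia.
Qed.

Lemma final_arith (f s : nat -> nat) N p (i : bool) :
  0 < p -> (forall k, 0 < k <= 2 ^ (N + p).+2 -> f k = s k + k * p /\ s k <= N) ->
  (forall k, 0 < k <= 2 ^ (N + p).+2 -> odd (trunc_log 2 (f k)) = i) -> False.
Proof.
move=> p0 Hf Hc.
set M := N + p.
have hM : M < 2 ^ M by apply: ltn_expl.
set P := 2 ^ M in hM.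
have E1 : 2 ^ M.+1 = 2 * P by rewrite expnS.
have E2 : 2 ^ M.+2 = 4 * P by rewrite !expnS -/P; lia.
rewrite -/M E2 in Hf Hc *.
have Hs : forall k, 1 <= k < 4 * P -> f k.+1 <= f k + M.
  move=> k Hk; have [H1 H2] := Hf k.+1 ltac:(lia); have [H3 H4] := Hf k ltac:(lia).
  rewrite H1 H3 /M; lia.
have F1 : f 1 <= M by have [H1 H2] := Hf 1 ltac:(lia); rewrite H1 /M; lia.
have FK : 4 * P <= f (4 * P).
  have [H1 H2] := Hf (4 * P) ltac:(lia); rewrite H1; nia.
case: (ivt (f:=f) (a:=1) (T:=2 * P) (D:=M) (b:=4 * P)) => //; try lia.
move=> k1 [Hk1 Hfk1].
case: (ivt (f:=f) (a:=1) (T:=P) (D:=M) (b:=4 * P)) => //; try lia.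
move=> k2 [Hk2 Hfk2].
have T1 : trunc_log 2 (f k1) = M.+1 by apply: trunc_log_eq => //; rewrite E1 expnS -/P; lia.
have T2 : trunc_log 2 (f k2) = M by apply: trunc_log_eq => //; rewrite -/P expnS -/P; lia.
have := Hc k1 ltac:(lia); have := Hc k2 ltac:(lia).
rewrite T1 T2 /= => <-; by case: (odd M).
Qed.

Section FlatH.
Variables (A : Type) (I : eqType) (P : A -> seq (I * int)%type).

Lemma flat_mem (l : list A) q : q \in flatten (map P l) -> exists z, List.In z l /\ q \in P z.
Proof.
elim: l => //= z l IH; rewrite mem_cat => /orP [Hq|/IH [w [Hw Hq]]].
  by exists z; split; [left|].
by exists w; split; [right|].
Qed.

Lemma flat_idx (l : list A) i : i \in idx (flatten (map P l)) -> exists z, List.In z l /\ i \in idx (P z).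
Proof.
move=> /mapP [q /flat_mem [z [Hz Hq]] ->]; exists z; split => //; exact: map_f.
Qed.

Lemma uniq_flat (l : list A) : List.NoDup l -> (forall z, List.In z l -> uniq (idx (P z))) ->
  (forall x y, List.In x l -> List.In y l -> x <> y -> forall i, i \in idx (P x) -> i \notin idx (P y)) ->
  uniq (idx (flatten (map P l))).
Proof.
elim: l => //= z l IH Hnd Hu Hd.
inversion Hnd; subst.
rewrite idx_cat cat_uniq Hu; last by left.
rewrite IH //; last first.
- by move=> x y Hx Hy; apply: Hd; right.
- by move=> w Hw; apply: Hu; right.
rewrite andbT; apply/hasP => [[i /flat_idx [w [Hw Hi]] Hiz]].
have nzw : w <> z by move=> E; subst w.
by move: (Hd w z (or_intror Hw) (or_introl erefl) nzw i Hi); rewrite Hiz.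
Qed.

Lemma size_flat (l : list A) p : (forall z, List.In z l -> size (P z) = p) ->
  size (flatten (map P l)) = (size l * p)%N.
Proof.
elim: l => //= z l IH H; rewrite size_cat H ?IH; first by rewrite mulSn.
- by move=> w Hw; apply: H; right.
- by left.
Qed.
End FlatH.

Lemma In_take (T : Type) k (l : seq T) z : List.In z (take k l) -> List.In z l.
Proof.
elim: l k => [|a l IH] [|k] /=; try tauto.
case => [<-|H]; [by left|by right; exact: IH H].
Qed.
Lemma NoDup_take (T : Type) k (l : seq T) : List.NoDup l -> List.NoDup (take k l).
Proof.
elim: l k => [|a l IH] [|k] //= H; try by constructor.
inversion H as [|? ? Hn Hd]; subst; constructor; last exact: IH.
by move=> Hin; apply: Hn; exact: In_take Hin.
Qed.

Section Main.
Local Open Scope ring_scope.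
Variable SS : CSG.
Local Notation Gm := (Gr SS).
Definition Rw : rel Gm := proj1_sig (well_ordering_principle Gm).
Lemma woRw : well_order Rw. Proof. exact: proj2_sig (well_ordering_principle Gm). Qed.
Local Notation gid := (@id Gm).
Local Notation evg := (ev gid).
Local Notation canong := (canon Rw gid).

Lemma ev1 (v : Gm) : evg [:: (v, 1%R)] = v.
Proof. by rewrite ev_cons ev_nil addr0 mulr1z. Qed.

Definition crep (v : Gm) : seq (Gm * int)%type := projT1 (cid (canon_ex woRw gid [:: (v, 1%R)])).
Lemma crep_canon v : canong (crep v).
Proof. by rewrite /crep; case: cid => L [CL EL]. Qed.
Lemma crep_ev v : evg (crep v) = v.
Proof. by rewrite /crep; case: cid => L [CL EL] /=; rewrite EL ev1. Qed.
Lemma crepE L v : canong L -> evg L = v -> L = crep v.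
Proof. move=> CL EL; apply: (canon_uniq_ev woRw CL (crep_canon v)); by rewrite crep_ev. Qed.

Definition sz (x : SS) : nat := size (crep (emb x)).
Definition col (x : SS) : bool := odd (trunc_log 2 (sz x)).

Lemma emb_sumNE (x : SS) l : emb (sumNE (@cop SS) x l) = \sum_(y <- x :: l) emb y.
Proof.
rewrite /sumNE; elim: l x => [|z l IH] x /=; first by rewrite big_seq1.
by rewrite IH !big_cons emb_add addrA.
Qed.

Lemma main_col (X : SS -> Prop) (i : bool) : ~ countable_set X ->
  ~ (forall y, FS (@cop SS) X y -> col y = i).
Proof.
move=> HX Hmono.
case: (pigeon sz HX) => n Hn.
pose S x := crep (emb x).
have HS : forall x, X x /\ sz x = n -> uniq (idx (S x)) /\ size (S x) = n.
  by move=> x [_ Hx]; split => //; apply: canon_uniq (crep_canon _).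
case: (DS Hn HS) => Rl HRl.
have Hmem : forall (P : SS -> seq (Gm * int)%type) x, sz x = n -> perm_eq (S x) (Rl ++ P x) ->
    [/\ uniq (idx Rl), uniq (idx (P x)), (forall q, q \in Rl ++ P x -> valid Rw gid q.1 q.2),
        size (P x) = (n - size Rl)%N & emb x = evg Rl + evg (P x)].
  move=> P x Hsz Hp.
  have U : uniq (idx (Rl ++ P x)) by rewrite -(perm_uniq (perm_map fst Hp)); exact: canon_uniq (crep_canon _).
  move: (U); rewrite idx_cat cat_uniq => /and3P [U1 _ U2].
  split => //.
  - by move=> q; rewrite -(perm_mem Hp) => Hq; case: (crep_canon (emb x)) => _; apply.
  - by rewrite /sz in Hsz; rewrite -Hsz -/(S x) (perm_size Hp) size_cat addKn.
  - by rewrite -ev_cat -(ev_perm _ Hp) crep_ev.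
have Hsplit : forall (P : SS -> seq (Gm * int)%type) (l : seq SS),
    (forall z, List.In z l -> emb z = evg Rl + evg (P z)) ->
    \sum_(z <- l) emb z = evg Rl *+ size l + evg (flatten (map P l)).
  move=> P l; elim: l => [|z l IH] H /=; first by rewrite big_nil ev_nil mulr0n addr0.
  rewrite big_cons IH; last by move=> w Hw; apply: H; right.
  rewrite H; last by left.
  by rewrite ev_cat mulrS addrACA.
case: (HRl 2%N [::]) => xs2 [P2 [Hs2 [Hnd2 [H32 H42]]]].
case: xs2 Hs2 Hnd2 H32 H42 => [|x1 [|x2 [|? ?]]] // _ Hnd2 H32 H42.
have [[Xx1 Sx1] [Px1 _]] := H32 x1 (or_introl erefl).
have [[Xx2 Sx2] [Px2 _]] := H32 x2 (or_intror (or_introl erefl)).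
case: (Hmem P2 x1 Sx1 Px1) => URl _ VRl1 Sz1 E1.
case: (Hmem P2 x2 Sx2 Px2) => _ _ _ Sz2 E2.
set p := (n - size Rl)%N in Sz1 Sz2.
have p0 : (0 < p)%N.
  rewrite lt0n; apply/eqP => p0.
  have x12 : x1 <> x2.
    move=> E; inversion Hnd2; subst; apply: H1; by left.
  apply: x12; apply: emb_inj.
  by rewrite E1 E2; move: Sz1 Sz2; rewrite p0 => /size0nil -> /size0nil ->.
have VRl : forall q, q \in Rl -> valid Rw gid q.1 q.2.
  by move=> q Hq; apply: VRl1; rewrite mem_cat Hq.
case: (sort_ex woRw URl VRl) => Rl' [CRl' PRl].
have ERl : evg Rl' = evg Rl by rewrite (ev_perm _ PRl).
case: (@closed_list _ _ Rw gid (idx Rl')) => [b _|C [HC ClC]]; first exact: FC woRw gid b.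
set N := size C.
case: (HRl (2 ^ (N + p).+2)%N C) => xs [P [Hs [Hnd [H3 H4]]]].
pose s (k : nat) := size (crep (evg Rl *~ k)).
pose y (k : nat) := sumNE (@cop SS) (head x1 (take k xs)) (behead (take k xs)).
apply: (final_arith (f := fun k => sz (y k)) (s := s) (N := N) (p := p) (i := i) p0).
  move=> k /andP [k0 kK].
  have HtK : size (take k xs) = k by rewrite size_takel // Hs.
  have Hl : forall z, List.In z (take k xs) -> [/\ X z, sz z = n, perm_eq (S z) (Rl ++ P z) &
      forall i, i \in idx (P z) -> i \notin C].
    by move=> z Hz; have [[Xz Sz] [Pz Fz]] := H3 z (In_take Hz); split.
  have emb_l : emb (y k) = \sum_(z <- take k xs) emb z.
    rewrite /y emb_sumNE; case: (take k xs) HtK => [|a l] //= HtK.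
    by move: k0; rewrite -HtK.
  have Hsum := Hsplit P (take k xs).
  rewrite HtK in Hsum.
  have CLk := crep_canon (evg Rl *~ k).
  have HLk : {subset idx (crep (evg Rl *~ k)) <= C}.
    apply: (canon_bound woRw ClC CRl' HC CLk); by rewrite crep_ev ERl.
  have UFl : uniq (idx (flatten (map P (take k xs)))).
    apply: uniq_flat; first exact: NoDup_take.
      by move=> z /Hl [_ Sz Pz _]; case: (Hmem P z Sz Pz).
    by move=> x y' Hx Hy; apply: H4; apply: In_take; [exact: Hx|exact: Hy].
  have UW : uniq (idx (crep (evg Rl *~ k) ++ flatten (map P (take k xs)))).
    rewrite idx_cat cat_uniq (canon_uniq CLk) UFl andbT /=.
    apply/hasP => [[j /flat_idx [z [Hz Hjz]] Hj]].
    by case: (Hl z Hz) => _ _ _ /(_ j Hjz); rewrite (HLk j Hj).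
  have VW : forall q, q \in crep (evg Rl *~ k) ++ flatten (map P (take k xs)) -> valid Rw gid q.1 q.2.
    move=> q; rewrite mem_cat => /orP [Hq|/flat_mem [z [Hz Hq]]].
      by case: CLk => _; apply.
    case: (Hl z Hz) => _ Sz Pz _; case: (Hmem P z Sz Pz) => _ _ V _ _.
    by apply: V; rewrite mem_cat Hq orbT.
  case: (sort_ex woRw UW VW) => W' [CW' PW].
  have EW : evg W' = emb (y k).
    rewrite -(ev_perm _ PW) ev_cat crep_ev emb_l Hsum ?pmulrn //.
    by move=> z Hz; case: (Hl z Hz) => _ Sz Pz _; case: (Hmem P z Sz Pz).
  have -> : sz (y k) = size W' by rewrite /sz -(crepE CW' EW).
  rewrite -(perm_size PW) size_cat (size_flat (p := p)) ?HtK; last first.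
    by move=> z Hz; case: (Hl z Hz) => _ Sz Pz _; case: (Hmem P z Sz Pz).
  split => //.
  by rewrite /s; have := uniq_leq_size (canon_uniq CLk) HLk; rewrite size_map.
move=> k /andP [k0 kK]; apply: Hmono.
have HtK : size (take k xs) = k by rewrite size_takel // Hs.
rewrite /y; case Et: (take k xs) HtK => [|a l] HtK; first by move: k0; rewrite -HtK.
exists a, l; split; first by rewrite -Et; apply: NoDup_take.
split => // z Hz; have : List.In z (take k xs) by rewrite Et.
move=> Hz'; have [[Xz _] _] := H3 z (In_take Hz'); exact: Xz.
Qed.
End Main.

Theorem theorem3p2 (G : Type) (op : G -> G -> G)
  (Hassoc : associative_op op) (Hcomm : commutative_op op)
  (Hcanc : cancellative_op op) :
  exists c : G -> bool,
    forall (X : G -> Prop) (i : bool),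
      ~ countable_set X ->
      ~ (forall y, FS op X y -> c y = i).
Proof.
case: (pselect (inhabited G)) => [[g0]|nG].
- pose SS := {| car := G; cop := op; cassoc := Hassoc; ccomm := Hcomm; ccanc := Hcanc; cpt := g0 |}.
  exists (@col SS) => X i HX; exact: (@main_col SS X i HX).
- exists (fun _ => true) => X i HX; exfalso; apply: HX.
  by exists (fun _ => 0%N) => x; exfalso; apply: nG; exact: (inhabits x).
Qed.
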